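(* Let $M$ be an $n$-dimensional manifold with local coordinates $(u^1,\dots,u^m,v^{m+1},\dots,v^n)$, and let $L$ be an affinor on $M$ with zero Nijenhuis torsion which in these coordinates has the form $L=\begin{pmatrix}A(\mathbf u)&0\\0&B(\mathbf v)\end{pmatrix}$, where $A$ is $m\times m$ depending only on $\mathbf u=(u^1,\dots,u^m)$, $B$ depends only on $\mathbf v=(v^{m+1},\dots,v^n)$, and $\mathrm{Spec}(A)\cap\mathrm{Spec}(B)=\emptyset$. Let $g$ and $\tilde g$ be non-degenerate symmetric bivectors with $\tilde g^{ij}=L^j_kg^{ki}$, written in block form $g=\begin{pmatrix}\sigma&0\\0&\eta\end{pmatrix}$, $\tilde g=\begin{pmatrix}\tilde\sigma&0\\0&\tilde\eta\end{pmatrix}$. If the Killing condition $\nabla^i\tilde g^{kj}+\nabla^k\tilde g^{ij}+\nabla^j\tilde g^{ik}=0$ holds, then $\sigma,\tilde\sigma$ depend only on $\mathbf u$ and $\eta,\tilde\eta$ depend only on $\mathbf v$.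
   Context: $\nabla$ is the Levi-Civita connection of $g$ and $\nabla^i=g^{is}\nabla_s$. The Nijenhuis torsion of $L$ is $\mathcal N^k_{ij}=L^s_i\partial_sL^k_j-L^s_j\partial_sL^k_i+L^k_s\partial_jL^s_i-L^k_s\partial_iL^s_j$. *)

(* Defs.v *)
From HB Require Import structures.
From mathcomp Require Import all_boot all_order all_algebra.
From mathcomp Require Import all_classical all_reals all_analysis.
From mathcomp Require Import complex.
Set Implicit Arguments. Unset Strict Implicit. Unset Printing Implicit Defensive.
Import Order.TTheory GRing.Theory Num.Theory.
Import numFieldNormedType.Exports.
Local Open Scope classical_set_scope.
Local Open Scope ring_scope.

Section Defs.
Variable R : realType.
Variable N : nat.
Notation pt := 'rV[R]_N.

Definition coordv (s : 'I_N) : pt := delta_mx 0 s.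

Definition pd (s : 'I_N) (f : pt -> R) (x : pt) : R := 'D_(coordv s) f x.

Definition pds (l : seq 'I_N) (f : pt -> R) : pt -> R :=
  foldr (fun s h => pd s h) f l.

Definition smooth_on (U : set pt) (f : pt -> R) : Prop :=
  forall (l : seq 'I_N) (s : 'I_N) (x : pt), U x -> derivable (pds l f) x (coordv s).

(* Nijenhuis torsion of the (1,1)-tensor L, L x k j = L^k_j at x *)
Definition nijenhuis (L : pt -> 'M[R]_N) (k i j : 'I_N) (x : pt) : R :=
  \sum_(s < N) ( L x s i * pd s (fun y => L y k j) x
               - L x s j * pd s (fun y => L y k i) x
               + L x k s * pd j (fun y => L y s i) x
               - L x k s * pd i (fun y => L y s j) x).

(* given the bivector g (g x i j = g^{ij}), its inverse g_{ij} *)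
Definition lower (g : pt -> 'M[R]_N) (x : pt) : 'M[R]_N := invmx (g x).

Definition christoffel (g : pt -> 'M[R]_N) (k i j : 'I_N) (x : pt) : R :=
  2^-1 * \sum_(l < N) g x k l *
    ( pd i (fun y => lower g y l j) x + pd j (fun y => lower g y l i) x
    - pd l (fun y => lower g y i j) x).

Definition cov2 (g T : pt -> 'M[R]_N) (s k j : 'I_N) (x : pt) : R :=
  pd s (fun y => T y k j) x
  + \sum_(l < N) (christoffel g k s l x * T x l j + christoffel g j s l x * T x k l).

Definition covup2 (g T : pt -> 'M[R]_N) (i k j : 'I_N) (x : pt) : R :=
  \sum_(s < N) g x i s * cov2 g T s k j x.

Definition gtilde (L g : pt -> 'M[R]_N) (x : pt) : 'M[R]_N :=
  \matrix_(i, j) \sum_(k < N) L x j k * g x k i.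

Definition killing (g T : pt -> 'M[R]_N) (U : set pt) : Prop :=
  forall x, U x -> forall i k j : 'I_N,
    covup2 g T i k j x + covup2 g T k i j x + covup2 g T j i k x = 0.

End Defs.

Definition cspec (R : realType) (n : nat) (A : 'M[R]_n) : set (complex R) :=
  [set z : complex R | eigenvalue (map_mx (real_complex R) A) z].

(* Main.v *)
Require Import Defs.
From HB Require Import structures.
From mathcomp Require Import all_boot all_order all_algebra.
From mathcomp Require Import all_classical all_reals all_analysis.
From mathcomp Require Import complex.
Import Order.TTheory GRing.Theory Num.Theory.
Import numFieldNormedType.Exports.
Local Open Scope classical_set_scope.
Local Open Scope ring_scope.
Section Syl.
Variable R : realType.
Local Notation C := (complex R).

Lemma not_eig_unit (F : fieldType) n (B : 'M[F]_n) z :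
  ~~ eigenvalue B z -> (B - z%:M) \in unitmx.
Proof.
move=> nz; rewrite unitmxE unitfE; apply/negP => /det0P [v v0 vB].
move/negP: nz; apply; apply/eigenvalueP; exists v => //.
by move/eqP: vB; rewrite mulmxBr subr_eq0 mul_mx_scalar => /eqP.
Qed.

Lemma horner_comm (F : comNzRingType) m p (A : 'M[F]_m.+1) (B : 'M[F]_p.+1)
  (X : 'M[F]_(p.+1, m.+1)) (q : {poly F}) :
  X *m A = B *m X -> X *m horner_mx A q = horner_mx B q *m X.
Proof.
move=> XA; elim/poly_ind: q => [|q c IH]; first by rewrite !rmorph0 mulmx0 mul0mx.
rewrite !rmorphD !rmorphM /= !horner_mx_X !horner_mx_C mulmxDr mulmxDl.
by rewrite mul_mx_scalar mul_scalar_mx -!mulmxE mulmxA IH -!mulmxA XA.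
Qed.

Lemma sylv_C (m p : nat) (A : 'M[C]_m.+1) (B : 'M[C]_p.+1) (X : 'M[C]_(p.+1, m.+1)) :
  (forall z, eigenvalue A z -> ~~ eigenvalue B z) ->
  X *m A = B *m X -> X = 0.
Proof.
move=> dis XA.
have := @horner_comm _ _ _ _ _ _ (char_poly A) XA; rewrite Cayley_Hamilton mulmx0.
have [r e] := closed_field_poly_normal (char_poly A).
rewrite (monicP (char_poly_monic A)) scale1r in e.
have : forall z, z \in r -> ~~ eigenvalue B z.
  by move=> z zr; apply: dis; rewrite eigenvalue_root_char e root_prod_XsubC.
rewrite e; clear e.
elim: r => [|z r IH] hr; first by rewrite big_nil rmorph1 mul1mx => <-.
rewrite big_cons rmorphM /= rmorphB /= horner_mx_X horner_mx_C -mulmxE -mulmxA.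
move=> h; apply: IH; first by move=> w wr; apply: hr; rewrite inE wr orbT.
have U := @not_eig_unit _ _ _ _ (hr z (mem_head _ _)).
by rewrite -(mulKmx U (_ *m X)) -h mulmx0.
Qed.

Lemma sylvester m p (A : 'M[R]_m) (B : 'M[R]_p) (N : 'M[R]_(m,p)) :
  cspec A `&` cspec B = set0 -> A^T *m N = N *m B^T -> N = 0.
Proof.
case: m A N => [|m] A N; first by move=> _ _; apply/matrixP => [[]].
case: p B N => [|p] B N; first by move=> _ _; apply/matrixP => ? [].
move=> dis e.
have XA : N^T *m A = B *m N^T by rewrite -[A]trmxK -trmx_mul e trmx_mul trmxK.
have XAc := congr1 (map_mx (real_complex R)) XA; rewrite !map_mxM in XAc.
have := @sylv_C _ _ _ _ _ _ XAc.
have inj : injective (map_mx (real_complex R) : 'M[R]_(p.+1, m.+1) -> _).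
  apply: map_mx_inj; exact: fmorph_inj.
move=> h; suff : N^T = 0 by move/(congr1 trmx); rewrite trmxK trmx0.
apply: inj; rewrite map_mx0; apply: h => z Az; apply/negP => Bz.
by have : (cspec A `&` cspec B) z by []; rewrite dis.
Qed.
End Syl.
Section An.
Variable R : realType.
Variable n : nat.
Local Notation pt := 'rV[R]_n.
Implicit Types (f h : pt -> R) (x : pt).

Lemma open_near (U : set pt) x : open U -> U x -> \forall y \near x, U y.
Proof. by move=> oU Ux; apply: open_nbhs_nbhs; split. Qed.

Lemma pd_near s f h x : (\forall y \near x, f y = h y) -> pd s f x = pd s h x.
Proof. by move=> e; rewrite /pd; apply: near_eq_derive. Qed.

Lemma my_derivable_near v f h x : (\forall y \near x, f y = h y) -> derivable f x v -> derivable h x v.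
Proof. by move=> e; apply: near_eq_derivable; apply: filterS e. Qed.

Lemma pd_near0 s f x : (\forall y \near x, f y = 0) -> pd s f x = 0.
Proof.
move=> e; rewrite (@pd_near s f (fun _ => 0) x e) /pd.
exact: (derive_cst (0 : R^o)).
Qed.

Lemma pd_mul s f h x : derivable f x (@coordv R n s) -> derivable h x (@coordv R n s) ->
  pd s (fun y => f y * h y) x = f x * pd s h x + h x * pd s f x.
Proof. by move=> df dh; rewrite /pd (deriveM df dh). Qed.

Lemma derivable_mul v f h x : derivable f x v -> derivable h x v ->
  derivable (fun y => f y * h y) x v.
Proof. by move=> df dh; apply: derivableM. Qed.

Lemma pd_sum k s (F : 'I_k -> pt -> R) x : (forall i, derivable (F i) x (@coordv R n s)) ->
  pd s (fun y => \sum_(i < k) F i y) x = \sum_(i < k) pd s (F i) x.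
Proof. by move=> dF; rewrite /pd -(derive_sum dF) fct_sumE. Qed.

Lemma derivable_bigsum (I : Type) (r : seq I) (P : pred I) (F : I -> pt -> R) v x :
  (forall i, derivable (F i) x v) -> derivable (fun y => \sum_(i <- r | P i) F i y) x v.
Proof.
move=> dF; elim: r => [|a r IH].
  by under eq_fun do rewrite big_nil; exact: derivable_cst.
under eq_fun do rewrite big_cons; case: (P a) => //.
exact: derivableD.
Qed.

Lemma derivable_bigprod (I : Type) (r : seq I) (P : pred I) (F : I -> pt -> R) v x :
  (forall i, derivable (F i) x v) -> derivable (fun y => \prod_(i <- r | P i) F i y) x v.
Proof.
move=> dF; elim: r => [|a r IH].
  by under eq_fun do rewrite big_nil; exact: derivable_cst.
under eq_fun do rewrite big_cons; case: (P a) => //.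
exact: derivable_mul.
Qed.

Lemma derivable_det k (F : pt -> 'M[R]_k) v x :
  (forall i j, derivable (fun y => F y i j) x v) -> derivable (fun y => \det (F y)) x v.
Proof.
move=> dF; rewrite /determinant; apply: derivable_bigsum => s.
apply: derivable_mul; first exact: derivable_cst.
exact: derivable_bigprod.
Qed.

Lemma derivable_inv k (F : pt -> 'M[R]_k) v x :
  (forall i j, derivable (fun y => F y i j) x v) ->
  (\forall y \near x, F y \in unitmx) ->
  forall i j, derivable (fun y => invmx (F y) i j) x v.
Proof.
move=> dF un i j.
have e : \forall y \near x, (\det (F y))^-1 * \adj (F y) i j = invmx (F y) i j.
  move: un; apply: filterS => y u.
  by rewrite /invmx u [in RHS]mxE.
apply: (@my_derivable_near _ (fun y => (\det (F y))^-1 * \adj (F y) i j) _ _ e); apply: derivable_mul.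
  apply: derivableV; last exact: derivable_det.
  by have := nbhs_singleton un; rewrite unitmxE unitfE.
rewrite /=; under eq_fun do rewrite mxE /cofactor.
apply: derivable_mul; first exact: derivable_cst.
by apply: derivable_det => a b; under eq_fun do rewrite !mxE; apply: dF.
Qed.
End An.
From mathcomp Require Import ring.
Section KA.
Variable R : realType.
Variable n : nat.
Variables (G K : 'I_n -> 'I_n -> R) (dK dH : 'I_n -> 'I_n -> 'I_n -> R).

Definition Gam c s l := 2^-1 * \sum_q G c q * (dH s q l + dH l q s - dH q s l).
Definition cu a c d := \sum_s G a s * (dK s c d + \sum_l (Gam c s l * K l d + Gam d s l * K c l)).
Definition Pp a b l := \sum_s \sum_q G a s * G b q * (2^-1 * (dH l q s + dH l s q)).
Definition Xx a c l := \sum_s G a s * Gam c s l.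

Lemma cuE a c d : cu a c d = \sum_s G a s * dK s c d + \sum_l (Xx a c l * K l d + Xx a d l * K c l).
Proof.
rewrite /cu; under eq_bigr do rewrite mulrDr; rewrite big_split /=; congr (_ + _).
under eq_bigr do rewrite mulr_sumr; rewrite exchange_big /=; apply: eq_bigr => l _.
rewrite /Xx !mulr_suml -big_split /=; apply: eq_bigr => s _; ring.
Qed.

Lemma pairP a b l : Xx a b l + Xx b a l = Pp a b l.
Proof.
rewrite /Xx /Gam.
under eq_bigr do rewrite mulr_sumr mulr_sumr.
under [X in _ + X]eq_bigr do rewrite mulr_sumr mulr_sumr.
rewrite [X in _ + X]exchange_big /= -big_split /=; apply: eq_bigr => s _.
rewrite -big_split /=; apply: eq_bigr => q _; ring.
Qed.

Lemma kill_alg : (forall a b, K a b = K b a) -> forall i k j,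
  cu i k j + cu k i j + cu j i k =
   \sum_s (G i s * dK s k j + G k s * dK s i j + G j s * dK s i k)
   + \sum_l (Pp i k l * K l j + Pp i j l * K l k + Pp k j l * K i l).
Proof.
move=> Ks i k j; rewrite !cuE -!big_split /=; apply: eq_bigr => l _.
rewrite -!pairP (Ks k l); ring.
Qed.
End KA.
Section Core.
Variable R : realType.
Variables (n mu nu : nat) (f : 'I_mu -> 'I_n) (h : 'I_nu -> 'I_n).
Local Notation pt := 'rV[R]_n.
Variables (L g : pt -> 'M[R]_n) (x : pt).
Hypothesis hsplit : forall F : 'I_n -> R, \sum_i F i = \sum_t F (f t) + \sum_e F (h e).
Hypothesis Lz : \forall y \near x, forall t e, L y (f t) (h e) = 0 /\ L y (h e) (f t) = 0.
Hypothesis Gz : \forall y \near x, forall t e, g y (f t) (h e) = 0 /\ g y (h e) (f t) = 0.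
Hypothesis Kz : \forall y \near x, forall t e,
  gtilde L g y (f t) (h e) = 0 /\ gtilde L g y (h e) (f t) = 0.
Hypothesis Gsym : \forall y \near x, (g y)^T = g y.
Hypothesis Gunit : \forall y \near x, g y \in unitmx.
Hypothesis dLd : forall i j s, derivable (fun y => L y i j) x (@coordv R n s).
Hypothesis dGd : forall i j s, derivable (fun y => g y i j) x (@coordv R n s).
Hypothesis dB0 : forall t e e', pd (f t) (fun y => L y (h e) (h e')) x = 0.
Hypothesis Ksym : (gtilde L g x)^T = gtilde L g x.
Hypothesis sig_unit : \matrix_(t, t') g x (f t) (f t') \in unitmx.
Hypothesis spec_dis : cspec (\matrix_(t, t') L x (f t) (f t'))
   `&` cspec (\matrix_(e, e') L x (h e) (h e')) = set0.
Hypothesis kil : forall i k j, covup2 g (gtilde L g) i k j x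
   + covup2 g (gtilde L g) k i j x + covup2 g (gtilde L g) j i k x = 0.

Local Notation G := (g x).
Local Notation K := (gtilde L g x).
Local Notation dG s i j := (pd s (fun y => g y i j) x).
Local Notation dL s i j := (pd s (fun y => L y i j) x).
Local Notation dH s i j := (pd s (fun y => lower g y i j) x).
Local Notation dK s i j := (pd s (fun y => gtilde L g y i j) x).

Lemma dHd i j s : derivable (fun y => lower g y i j) x (@coordv R n s).
Proof. exact: derivable_inv. Qed.

Lemma Gsym_x i j : G i j = G j i.
Proof. by rewrite -[in LHS](nbhs_singleton Gsym) mxE. Qed.

Lemma dG_sym s i j : dG s i j = dG s j i.
Proof. by apply: pd_near; move: Gsym; apply: filterS => y e; rewrite -[in LHS]e mxE. Qed.

Lemma dH_sym s i j : dH s i j = dH s j i.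
Proof.
apply: pd_near; move: Gsym; apply: filterS => y e.
by rewrite /lower -[in LHS]e -trmx_inv mxE.
Qed.

Lemma prod_rule l i j :
  \sum_k (G i k * dH l k j + lower g x k j * dG l i k) = 0.
Proof.
have e : \forall y \near x, \sum_k g y i k * lower g y k j = (1%:M : 'M[R]_n) i j.
  by move: Gunit; apply: filterS => y u; rewrite /lower -(mulmxV u) mxE.
have h1 : pd l (fun y => \sum_k g y i k * lower g y k j) x = 0.
  rewrite (@pd_near _ _ l _ (fun _ => (1%:M : 'M[R]_n) i j) x e).
  exact: (derive_cst ((1%:M : 'M[R]_n) i j : R^o)).
rewrite (@pd_sum _ _ _ l (fun k y => g y i k * lower g y k j) x) in h1; last first.
  by move=> k; apply: derivable_mul => //; apply: dHd.
rewrite -[RHS]h1; apply: eq_bigr => k _; rewrite pd_mul //; apply: dHd.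
Qed.


Lemma dG_eq l a b : dG l a b = - \sum_s \sum_q G a s * dH l s q * G q b.
Proof.
pose D := \matrix_(i, j) dG l i j; pose E := \matrix_(i, j) dH l i j.
have e1 : G *m E + D *m lower g x = 0.
  apply/matrixP => i j; rewrite !mxE -[RHS](prod_rule l i j) -big_split /=.
  by apply: eq_bigr => k _; rewrite !mxE [_ * lower g x k j]mulrC.
have e2 : D = - (G *m E *m G).
  have := congr1 (mulmx^~ G) e1; rewrite mul0mx mulmxDl -!mulmxA /lower.
  rewrite mulVmx ?(nbhs_singleton Gunit) // mulmx1 => /eqP.
  by rewrite addrC addr_eq0 => /eqP.
rewrite (_ : dG l a b = D a b); last by rewrite mxE.
rewrite e2 !mxE.
congr (- _); under eq_bigr do rewrite !mxE mulr_suml.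
rewrite exchange_big; apply: eq_bigr => s _; apply: eq_bigr => q _; by rewrite mxE.
Qed.

Lemma Pp_eq a b l : @Pp R n (fun i j => G i j) (fun l i j => dH l i j) a b l = - dG l a b.
Proof.
rewrite dG_eq opprK /Pp; apply: eq_bigr => s _; apply: eq_bigr => q _.
rewrite (dH_sym l q s) (Gsym_x q b); by field.
Qed.

Lemma dK0 s t e : dK s (f t) (h e) = 0.
Proof. by apply: pd_near0; move: Kz; apply: filterS => y /(_ t e) []. Qed.
Lemma dG0 s t e : dG s (f t) (h e) = 0.
Proof. by apply: pd_near0; move: Gz; apply: filterS => y /(_ t e) []. Qed.

Lemma schouten t c d :
  \sum_s G (f t) s * dK s (h c) (h d) = \sum_l dG l (h c) (h d) * K (f t) l.
Proof.
have Ks : forall a b, K a b = K b a by move=> a b; rewrite -[in LHS]Ksym mxE.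
pose GG : 'I_n -> 'I_n -> R := fun i j => G i j.
pose HH : 'I_n -> 'I_n -> 'I_n -> R := fun l i j => dH l i j.
have PE : forall a b l, @Pp R n GG HH a b l = - dG l a b := Pp_eq.
have e := @kill_alg R n GG (fun i j => K i j)
   (fun s i j => dK s i j) HH Ks (f t) (h c) (h d).
have k0 := kil (f t) (h c) (h d).
rewrite [LHS]e in k0.
move: k0; rewrite (eq_bigr (fun s => G (f t) s * dK s (h c) (h d))); last first.
  by move=> s _; rewrite !dK0 !mulr0 !addr0.
rewrite [X in _ + X = _](eq_bigr (fun l => - (dG l (h c) (h d) * K (f t) l))); last first.
  by move=> l _; rewrite !PE !dG0 !oppr0 !mul0r !add0r mulNr.
by rewrite sumrN => /eqP; rewrite subr_eq0 => /eqP.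
Qed.

Lemma Lx t e : L x (f t) (h e) = 0 /\ L x (h e) (f t) = 0.
Proof. exact: (nbhs_singleton Lz). Qed.
Lemma Gx t e : G (f t) (h e) = 0 /\ G (h e) (f t) = 0.
Proof. exact: (nbhs_singleton Gz). Qed.
Lemma Kx t e : K (f t) (h e) = 0 /\ K (h e) (f t) = 0.
Proof. exact: (nbhs_singleton Kz). Qed.

Lemma dK_gen s a b : dK s a b = \sum_k (L x b k * dG s k a + G k a * dL s b k).
Proof.
rewrite /gtilde; under eq_fun do rewrite mxE.
rewrite (@pd_sum _ _ _ s (fun k y => L y b k * g y k a) x) //.
by apply: eq_bigr => k _; rewrite pd_mul.
by move=> k; apply: derivable_mul.
Qed.

Lemma dK_exp t' c d : dK (f t') (h c) (h d) = \sum_e L x (h d) (h e) * dG (f t') (h e) (h c).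
Proof.
rewrite dK_gen hsplit big1 ?add0r; last first.
  by move=> k _; rewrite (Lx k d).2 (Gx k c).1 !mul0r addr0.
by apply: eq_bigr => e _; rewrite dB0 mulr0 addr0.
Qed.

Lemma K_exp t t' : K (f t) (f t') = \sum_t'' L x (f t') (f t'') * G (f t'') (f t).
Proof.
rewrite mxE hsplit [X in _ + X]big1 ?addr0 //.
by move=> e _; rewrite (Lx t' e).1 mul0r.
Qed.

Lemma core_g t e c : dG (f t) (h e) (h c) = 0.
Proof.
pose sig := \matrix_(t, t') G (f t) (f t').
pose A := \matrix_(t, t') L x (f t) (f t').
pose B := \matrix_(e, e') L x (h e) (h e').
pose Mc := \matrix_(t', e) dG (f t') (h e) (h c).
suff : Mc = 0 by move/(congr1 (fun M : 'M[R]_(mu, nu) => M t e)); rewrite !mxE.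
apply: (@sylvester R _ _ _ _ _ spec_dis).
have : sig *m (Mc *m B^T) = sig *m (A^T *m Mc).
  apply/matrixP => t0 d; rewrite !mxE.
  have := schouten t0 c d.
  rewrite hsplit [X in _ + X = _]big1 ?addr0; last by move=> e0 _; rewrite (Gx t0 e0).1 mul0r.
  rewrite hsplit [X in _ + X]big1 ?addr0; last by move=> e0 _; rewrite (Kx t0 e0).1 mulr0.
  move=> E.
  transitivity (\sum_t' G (f t0) (f t') * dK (f t') (h c) (h d)).
    apply: eq_bigr => t' _; rewrite dK_exp !mxE; congr (_ * _).
    by apply: eq_bigr => e0 _; rewrite !mxE mulrC.
  rewrite E.
  under eq_bigr do rewrite K_exp mulr_sumr.
  rewrite exchange_big /=; apply: eq_bigr => t'' _.
  rewrite !mxE mulr_sumr; apply: eq_bigr => t' _.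
  rewrite !mxE (dG_sym _ (h c)) (Gsym_x (f t'') (f t0)); ring.
by move/(congr1 (mulmx (invmx sig))); rewrite !mulKmx.
Qed.

Lemma core_gt t e c : dK (f t) (h e) (h c) = 0.
Proof. by rewrite dK_exp big1 // => e0 _; rewrite core_g mulr0. Qed.
End Core.
Arguments open_near {R n U x}.
Lemma unit_blocks {R : realType} {m p} {M : 'M[R]_(m + p)} :
  ursubmx M = 0 -> dlsubmx M = 0 -> \det M != 0 ->
  ulsubmx M \in unitmx /\ drsubmx M \in unitmx.
Proof.
move=> ur dl; rewrite -[M]submxK ur dl det_ublock mulf_eq0 negb_or => /andP [a b].
by rewrite !unitmxE !unitfE block_mxKul block_mxKdr.
Qed.

Lemma blkz {R : realType} {m p : nat} {x : 'rV[R]_(m + p)} {F : 'rV[R]_(m + p) -> 'M[R]_(m + p)}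
  {P : set 'rV[R]_(m + p)} : (\forall y \near x, P y) ->
  (forall y, P y -> ursubmx (F y) = 0 /\ dlsubmx (F y) = 0) ->
  (\forall y \near x, forall (t : 'I_p) (e : 'I_m),
     F y (rshift m t) (lshift p e) = 0 /\ F y (lshift p e) (rshift m t) = 0) /\
  (\forall y \near x, forall (t : 'I_m) (e : 'I_p),
     F y (lshift p t) (rshift m e) = 0 /\ F y (rshift m e) (lshift p t) = 0).
Proof.
move=> NP H; split; move: NP; apply: filterS => y /H [u d] t e.
  by split; [move/matrixP: d => /(_ t e) | move/matrixP: u => /(_ e t)]; rewrite !mxE.
by split; [move/matrixP: u => /(_ t e) | move/matrixP: d => /(_ e t)]; rewrite !mxE.
Qed.

Theorem lemma2 (R : realType) (m p : nat) (U : set 'rV[R]_(m + p))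
  (L g : 'rV[R]_(m + p) -> 'M[R]_(m + p)) :
  open U ->
  (forall i j, smooth_on U (fun x => L x i j)) ->
  (forall i j, smooth_on U (fun x => g x i j)) ->
  (* zero Nijenhuis torsion *)
  (forall x, U x -> forall k i j, nijenhuis L k i j x = 0) ->
  (* L = diag(A, B) *)
  (forall x, U x -> ursubmx (L x) = 0 /\ dlsubmx (L x) = 0) ->
  (* A depends only on u, B depends only on v *)
  (forall x, U x -> forall (i j : 'I_m) (a : 'I_p),
      pd (rshift m a) (fun y => ulsubmx (L y) i j) x = 0) ->
  (forall x, U x -> forall (a b : 'I_p) (i : 'I_m),
      pd (lshift p i) (fun y => drsubmx (L y) a b) x = 0) ->
  (* Spec(A) and Spec(B) are disjoint *)
  (forall x, U x -> cspec (ulsubmx (L x)) `&` cspec (drsubmx (L x)) = set0) ->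
  (* g and tilde g are non-degenerate symmetric bivectors *)
  (forall x, U x -> (g x)^T = g x /\ \det (g x) != 0) ->
  (forall x, U x -> (gtilde L g x)^T = gtilde L g x /\ \det (gtilde L g x) != 0) ->
  (* block forms of g and tilde g *)
  (forall x, U x -> ursubmx (g x) = 0 /\ dlsubmx (g x) = 0) ->
  (forall x, U x -> ursubmx (gtilde L g x) = 0 /\ dlsubmx (gtilde L g x) = 0) ->
  (* Killing condition for tilde g w.r.t. the Levi-Civita connection of g *)
  killing g (gtilde L g) U ->
  forall x, U x ->
    (forall (i j : 'I_m) (a : 'I_p),
        pd (rshift m a) (fun y => ulsubmx (g y) i j) x = 0 /\
        pd (rshift m a) (fun y => ulsubmx (gtilde L g y) i j) x = 0) /\
    (forall (a b : 'I_p) (i : 'I_m),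
        pd (lshift p i) (fun y => drsubmx (g y) a b) x = 0 /\
        pd (lshift p i) (fun y => drsubmx (gtilde L g y) a b) x = 0).
Proof.
move=> oU sL sG _ Lbl dA dB spec gS gtS gbl gtbl kil x Ux.
have NU := open_near oU Ux.
have dLd : forall i j s, derivable (fun y => L y i j) x (@coordv R (m + p) s).
  by move=> i j s; apply: (sL i j [::]).
have dGd : forall i j s, derivable (fun y => g y i j) x (@coordv R (m + p) s).
  by move=> i j s; apply: (sG i j [::]).
have Gsym : \forall y \near x, (g y)^T = g y.
  by move: NU; apply: filterS => y /gS [].
have Gunit : \forall y \near x, g y \in unitmx.
  by move: NU; apply: filterS => y /gS [_]; rewrite unitmxE unitfE.
have Ksym := (gtS x Ux).1.
have kx := kil x Ux.
have [ulu dru] := unit_blocks (gbl x Ux).1 (gbl x Ux).2 (gS x Ux).2.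
have [Lz1 Lz2] := blkz NU Lbl.
have [Gz1 Gz2] := blkz NU gbl.
have [Kz1 Kz2] := blkz (F := gtilde L g) NU (fun y Uy => gtbl y Uy).
split.
- have hs : forall F : 'I_(m + p) -> R,
      \sum_i F i = \sum_t F (rshift m t) + \sum_e F (lshift p e).
    by move=> F; rewrite big_split_ord addrC.
  have dB0 : forall t e e', pd (rshift m t) (fun y => L y (lshift p e) (lshift p e')) x = 0.
    move=> t e e'; rewrite -(dA x Ux e e' t); congr pd.
    by apply/funext => y; rewrite !mxE.
  have sig : \matrix_(t, t') g x (rshift m t) (rshift m t') \in unitmx.
    by rewrite (_ : \matrix_(t, t') _ = drsubmx (g x)) //; apply/matrixP => a b; rewrite !mxE.
  have sp : cspec (\matrix_(t, t') L x (rshift m t) (rshift m t'))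
     `&` cspec (\matrix_(e, e') L x (lshift p e) (lshift p e')) = set0.
    rewrite setIC (_ : \matrix_(t, t') _ = drsubmx (L x)); last by apply/matrixP => a b; rewrite !mxE.
    by rewrite (_ : \matrix_(t, t') _ = ulsubmx (L x)) ?(spec x Ux) //; apply/matrixP => a b; rewrite !mxE.
  have C1 := @core_g R (m + p) p m (@rshift m p) (@lshift m p) L g x hs Lz1 Gz1 Kz1 Gsym Gunit
      dLd dGd dB0 Ksym sig sp kx.
  have C2 := @core_gt R (m + p) p m (@rshift m p) (@lshift m p) L g x hs Lz1 Gz1 Kz1 Gsym Gunit
      dLd dGd dB0 Ksym sig sp kx.
  move=> i j a; split.
    by rewrite -(C1 a i j); congr pd; apply/funext => y; rewrite !mxE.
  by rewrite -(C2 a i j); congr pd; apply/funext => y; rewrite !mxE.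
- have hs : forall F : 'I_(m + p) -> R,
      \sum_i F i = \sum_t F (lshift p t) + \sum_e F (rshift m e).
    by move=> F; rewrite big_split_ord.
  have dB0 : forall t e e', pd (lshift p t) (fun y => L y (rshift m e) (rshift m e')) x = 0.
    move=> t e e'; rewrite -(dB x Ux e e' t); congr pd.
    by apply/funext => y; rewrite !mxE.
  have sig : \matrix_(t, t') g x (lshift p t) (lshift p t') \in unitmx.
    by rewrite (_ : \matrix_(t, t') _ = ulsubmx (g x)) //; apply/matrixP => a b; rewrite !mxE.
  have sp : cspec (\matrix_(t, t') L x (lshift p t) (lshift p t'))
     `&` cspec (\matrix_(e, e') L x (rshift m e) (rshift m e')) = set0.
    rewrite (_ : \matrix_(t, t') _ = ulsubmx (L x)); last by apply/matrixP => a b; rewrite !mxE.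
    by rewrite (_ : \matrix_(t, t') _ = drsubmx (L x)) ?(spec x Ux) //; apply/matrixP => a b; rewrite !mxE.
  have C1 := @core_g R (m + p) m p (@lshift m p) (@rshift m p) L g x hs Lz2 Gz2 Kz2 Gsym Gunit
      dLd dGd dB0 Ksym sig sp kx.
  have C2 := @core_gt R (m + p) m p (@lshift m p) (@rshift m p) L g x hs Lz2 Gz2 Kz2 Gsym Gunit
      dLd dGd dB0 Ksym sig sp kx.
  move=> a b i; split.
    by rewrite -(C1 i a b); congr pd; apply/funext => y; rewrite !mxE.
  by rewrite -(C2 i a b); congr pd; apply/funext => y; rewrite !mxE.
Qed.
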